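(* Let $k\ge 1$. There is no strategy proof mechanism locating $k$ facilities on $[0,1]$ whose approximation ratio for the Gini index of utilities is bounded; that is, for every strategy proof mechanism $M$ for $k$ facilities and every constant $c>0$ there exist a number of agents $n$ and a profile $x=(x_1,\dots,x_n)\in[0,1]^n$ such that $G_u(M(x)) > c\cdot \min_{Y} G_u(Y)$, where the minimum ranges over all placements $Y$ of $k$ facilities in $[0,1]$.
   Context: Agents $1,\dots,n$ ($n\ge1$ arbitrary) report locations $x_1,\dots,x_n\in[0,1]$ (a profile). A mechanism for $k$ facilities maps every profile (for every $n$) to a placement $Y$ of $k$ facility locations in $[0,1]$. For a placement $Y$, agent $i$'s distance is $d_i=\min_{y\in Y}|x_i-y|$ and its utility is $u_i=1-d_i$. The Gini index of utilities of $Y$ is $G_u(Y)=\frac{\sum_{i=1}^n\sum_{j=1}^n|u_i-u_j|}{2n\sum_{i=1}^n u_i}$ (defined when $\sum_i u_i>0$). A mechanism $M$ is strategy proof if for every profile $x$, every agent $i$ and every $x_i'\in[0,1]$, the distance from the true location $x_i$ to the nearest facility of $M(x_1,\dots,x_i',\dots,x_n)$ is not strictly smaller than the distance from $x_i$ to the nearest facility of $M(x)$. The approximation ratio is bounded if there is a constant $c$ with $G_u(M(x))\le c\cdot\min_Y G_u(Y)$ for all profiles $x$. *)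

(* Defs.v *)
From mathcomp Require Import all_boot all_order all_algebra.
From mathcomp Require Import reals.
Set Implicit Arguments. Unset Strict Implicit. Unset Printing Implicit Defensive.
Import Order.TTheory GRing.Theory Num.Theory.
Local Open Scope ring_scope.

Section FacLoc.
Variable R : realType.

Definition profile n (x : 'I_n -> R) : Prop := forall i, 0 <= x i <= 1.

Definition placement k (Y : 'I_k -> R) : Prop := forall j, 0 <= Y j <= 1.

(* distance from p to the nearest facility of Y.  The fold starts from 1;
   for k >= 1 and points/facilities in [0,1] all distances are <= 1,
   so this is exactly min_j |p - Y j|. *)
Definition dist k (Y : 'I_k -> R) (p : R) : R :=
  \big[Num.min/1]_(j < k) `|p - Y j|.

Definition util k (Y : 'I_k -> R) (p : R) : R := 1 - dist Y p.

Definition sum_util k n (Y : 'I_k -> R) (x : 'I_n -> R) : R :=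
  \sum_(i < n) util Y (x i).

Definition gini k n (Y : 'I_k -> R) (x : 'I_n -> R) : R :=
  (\sum_(i < n) \sum_(j < n) `|util Y (x i) - util Y (x j)|)
  / (2 * n%:R * sum_util Y x).

Definition mechanism k := forall n : nat, ('I_n -> R) -> ('I_k -> R).

Definition mech_valid k (M : mechanism k) : Prop :=
  forall n (x : 'I_n -> R), profile x -> placement (M n x).

Definition update n (x : 'I_n -> R) (i : 'I_n) (v : R) : 'I_n -> R :=
  fun j => if j == i then v else x j.

Definition strategy_proof k (M : mechanism k) : Prop :=
  forall n (x : 'I_n -> R), profile x ->
  forall (i : 'I_n) (v : R), 0 <= v <= 1 ->
    dist (M n x) (x i) <= dist (M n (update x i v)) (x i).

End FacLoc.

(* Main.v *)
Require Import Defs.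
From mathcomp Require Import all_boot all_order all_algebra.
From mathcomp Require Import reals.
From mathcomp Require Import ring lra.
Import Order.TTheory GRing.Theory Num.Theory.
Local Open Scope ring_scope.

Section Helpers.
Variable R : realType.

Lemma dist_le1 k (Y : 'I_k -> R) p : dist Y p <= 1.
Proof. rewrite /dist; elim/big_rec: _ => // j m _ Hm; by rewrite ge_min Hm orbT. Qed.

Lemma dist_ge0 k (Y : 'I_k -> R) p : 0 <= dist Y p.
Proof. rewrite /dist; elim/big_rec: _ => // j m _ Hm; by rewrite le_min Hm normr_ge0. Qed.

Lemma dist_lej k (Y : 'I_k -> R) p j : dist Y p <= `|p - Y j|.
Proof. by rewrite /dist (bigD1 j) //= ge_min lexx. Qed.

Lemma dist_geP k (Y : 'I_k -> R) p d : d <= 1 ->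
  (forall j, d <= `|p - Y j|) -> d <= dist Y p.
Proof. move=> d1 H; rewrite /dist; elim/big_rec: _ => // j m _ Hm; by rewrite le_min Hm H. Qed.

Lemma dist_att k (Y : 'I_k -> R) p : (0 < k)%N ->
  (forall j, `|p - Y j| <= 1) -> exists j, `|p - Y j| = dist Y p.
Proof.
move=> hk H.
have : dist Y p = 1 \/ exists j, dist Y p = `|p - Y j|.
  rewrite /dist; apply: (big_ind (fun m => m = 1 \/ exists j, m = `|p - Y j|)).
  - by left.
  - move=> a b Ha Hb /=; rewrite /Order.min; case: ifP => _; by [].
    idtac.
  - by move=> j _; right; exists j.
case=> [E|[j E]]; last by exists j.
exists (Ordinal hk); apply/le_anti; rewrite E H /=; rewrite -E; exact: dist_lej.
Qed.

Lemma dist_eq k (Y : 'I_k -> R) p d : d <= 1 -> (forall j, d <= `|p - Y j|) ->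
  (exists j, `|p - Y j| = d) -> dist Y p = d.
Proof.
move=> d1 H [j Hj]; apply/le_anti; apply/andP; split; last exact: dist_geP.
rewrite -Hj; exact: dist_lej.
Qed.

Lemma util_ge0 k (Y : 'I_k -> R) p : 0 <= util Y p.
Proof. by rewrite /util subr_ge0 dist_le1. Qed.

Lemma gini_eq0 k n (Y : 'I_k -> R) (x : 'I_n -> R) d :
  (forall i, dist Y (x i) = d) -> gini Y x = 0.
Proof.
move=> H; rewrite /gini big1 ?mul0r // => i _; rewrite big1 // => j _.
by rewrite /util !H subrr normr0.
Qed.

Lemma sum_util_gt0 k n (Y : 'I_k -> R) (x : 'I_n -> R) i0 :
  dist Y (x i0) < 1 -> 0 < sum_util Y x.
Proof.
move=> h; rewrite /sum_util (bigD1 i0) //=.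
have := @sumr_ge0 _ _ (index_enum 'I_n) (fun i => i != i0) (fun i => util Y (x i))
  (fun i _ => util_ge0 _ _ _).
rewrite /util in h *; lra.
Qed.

Lemma gini_ge0 k n (Y : 'I_k -> R) (x : 'I_n -> R) :
  0 < sum_util Y x -> 0 <= gini Y x.
Proof.
move=> hs; rewrite /gini divr_ge0 //; first by do 2 (apply: sumr_ge0 => ? _).
by rewrite !mulr_ge0 // ltW.
Qed.

Lemma gini_gt0 k n (Y : 'I_k -> R) (x : 'I_n -> R) i0 j0 :
  (0 < n)%N -> 0 < sum_util Y x -> dist Y (x i0) != dist Y (x j0) -> 0 < gini Y x.
Proof.
move=> hn hs hne; rewrite /gini divr_gt0 //; last by rewrite !mulr_gt0 // ltr0n.
rewrite (bigD1 i0) //= (bigD1 j0) //=.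
have t : 0 < `|util Y (x i0) - util Y (x j0)|.
  rewrite normr_gt0 /util; apply/eqP => E; move/eqP: hne; apply; lra.
have s1 := @sumr_ge0 _ _ (index_enum 'I_n) (fun j => j != j0)
  (fun j => `|util Y (x i0) - util Y (x j)|) (fun j _ => normr_ge0 _).
have s2 := @sumr_ge0 _ _ (index_enum 'I_n) (fun i => i != i0)
  (fun i => \sum_(j < n) `|util Y (x i) - util Y (x j)|)
  (fun i _ => sumr_ge0 _ (fun j _ => normr_ge0 _)).
lra.
Qed.

End Helpers.

Theorem theorem1 (R : realType) (k : nat) (hk : (0 < k)%N)
  (M : mechanism R k) (hM : mech_valid M) (hsp : strategy_proof M)
  (c : R) (hc : 0 < c) :
  exists (n : nat) (x : 'I_n -> R),
    [/\ (0 < n)%N, profile x, 0 < sum_util (M n x) x &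
      exists Y0 : 'I_k -> R,
        [/\ placement Y0, 0 < sum_util Y0 x,
            (forall Y : 'I_k -> R, placement Y -> 0 < sum_util Y x ->
               gini Y0 x <= gini Y x) &
            c * gini Y0 x < gini (M n x) x]].
Proof.
set K : R := k%:R.
have K1 : 1 <= K by rewrite /K ler1n.
set u : R := (8 * K)^-1.
have u0 : 0 < u by rewrite /u invr_gt0; lra.
have uK : 8 * K * u = 1 by rewrite /u mulfV //; apply/eqP => h; lra.
have iK : forall i : 'I_k.+1, (i:nat)%:R <= K :> R.
  by move=> i; rewrite /K ler_nat -ltnS.
have jK : forall j : 'I_k, (j:nat)%:R + 1 <= K :> R.
  by move=> j; rewrite /K natr1 ler_nat.
have i1 : forall i : 'I_k.+1, i != ord0 -> 1 <= (i:nat)%:R :> R.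
  move=> i hi; rewrite ler1n lt0n; apply/eqP => h; move/eqP: hi; apply.
  exact: val_inj.
pose X (e : R) (i : 'I_k.+1) : R :=
  if i == ord0 then (8 - 2 * e) * u else 8 * (i:nat)%:R * u.
pose Yp (e : R) (j : 'I_k) : R := (8 * (j:nat)%:R + 8 - e) * u.
have profX : forall e, 0 < e <= 4 -> profile (X e).
  move=> e /andP[e0 e4] i; rewrite /X; case: eqP => [_|/eqP hi].
    apply/andP; split; nra.
  have := iK i; have := i1 i hi => a b.
  apply/andP; split; nra.
have plY : forall e, 0 < e <= 4 -> placement (Yp e).
  move=> e /andP[e0 e4] j; rewrite /Yp; have := jK j => a.
  have := ler0n R j => b.
  apply/andP; split; nra.
have keyD : forall e, 0 < e <= 4 -> forall i : 'I_k.+1, dist (Yp e) (X e i) = e * u.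
  move=> e /andP[e0 e4] i; apply: dist_eq.
  - nra.
  - move=> j; rewrite /X /Yp; have J0 := ler0n R j.
    case: eqP => [_|/eqP hi].
      rewrite ler_normr; apply/orP; right; nra.
    have I1 := i1 i hi.
    case: (leqP i j) => hij.
      have : (i:nat)%:R <= (j:nat)%:R :> R by rewrite ler_nat.
      move=> h; rewrite ler_normr; apply/orP; right; nra.
    have : (j:nat)%:R + 1 <= (i:nat)%:R :> R by rewrite natr1 ler_nat.
    move=> h; rewrite ler_normr; apply/orP; left; nra.
  - rewrite /X /Yp; case: eqP => [_|/eqP hi].
      exists (Ordinal hk) => /=.
      rewrite (_ : _ - _ = - (e * u)); last by ring.
      by rewrite normrN ger0_norm //; nra.
    have ip : (0 < i)%N by rewrite lt0n; apply/eqP => h; move/eqP: hi; apply; exact: val_inj.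
    have ilt : (i.-1 < k)%N by rewrite -ltnS prednK.
    exists (Ordinal ilt) => /=.
    have -> : (i:nat)%:R = (i.-1)%:R + 1 :> R by rewrite natr1 prednK.
    rewrite (_ : _ - _ = e * u); last by ring.
    by rewrite ger0_norm //; nra.
have e3 : 0 < (3:R) <= 4 by apply/andP; split; lra.
have e4 : 0 < (4:R) <= 4 by apply/andP; split; lra.
set x := X 3.
set x' := update x ord0 0.
have x'E : forall i, x' i = X 4 i.
  move=> i; rewrite /x' /update /x /X; case: eqP => _ //; lra.
have profx' : profile x'.
  by move=> i; rewrite x'E; apply: profX.
have nonEq : forall (z : 'I_k.+1 -> R) i0, profile z ->
    ~~ (dist (M k.+1 z) (z i0) == dist (M k.+1 z) (z ord0)) ->
    0 < sum_util (M k.+1 z) z.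
  move=> z i0 pz hne.
  case: (ltrP (dist (M k.+1 z) (z i0)) 1) => h; first exact: (sum_util_gt0 _ _ _ _ _ _ h).
  apply: (@sum_util_gt0 _ _ _ _ _ ord0).
  have E1 : dist (M k.+1 z) (z i0) = 1 by apply/le_anti; rewrite h dist_le1.
  rewrite lt_neqAle dist_le1 andbT -E1 eq_sym; exact: hne.
case: (boolP [forall i, dist (M k.+1 x') (x' i) == dist (M k.+1 x') (x' ord0)]) => E';
  last first.
  move: E'; rewrite negb_forall => /existsP [i0 Hi0].
  exists k.+1, x'; split => //; first exact: nonEq Hi0.
  have dY : forall i, dist (Yp 4) (x' i) = 4 * u by move=> i; rewrite x'E keyD.
  exists (Yp 4); split.
  - exact: plY.
  - apply: (@sum_util_gt0 _ _ _ _ _ ord0); rewrite dY; nra.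
  - by move=> Y _ hY; rewrite (gini_eq0 _ _ _ _ _ _ dY); apply: gini_ge0.
  - rewrite (gini_eq0 _ _ _ _ _ _ dY) mulr0; apply: (gini_gt0 _ _ _ _ _ i0 ord0) => //.
    exact: nonEq Hi0.
have profx : profile x by apply: profX.
case: (boolP [forall i, dist (M k.+1 x) (x i) == dist (M k.+1 x) (x ord0)]) => E;
  last first.
  move: E; rewrite negb_forall => /existsP [i0 Hi0].
  exists k.+1, x; split => //; first exact: nonEq Hi0.
  have dY : forall i, dist (Yp 3) (x i) = 3 * u by move=> i; rewrite keyD.
  exists (Yp 3); split.
  - exact: plY.
  - apply: (@sum_util_gt0 _ _ _ _ _ ord0); rewrite dY; nra.
  - by move=> Y _ hY; rewrite (gini_eq0 _ _ _ _ _ _ dY); apply: gini_ge0.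
  - rewrite (gini_eq0 _ _ _ _ _ _ dY) mulr0; apply: (gini_gt0 _ _ _ _ _ i0 ord0) => //.
    exact: nonEq Hi0.
exfalso.
set Y := M k.+1 x.
set D := dist Y (x ord0).
have EE : forall i, dist Y (x i) = D by move=> i; apply/eqP; move/forallP: E; apply.
have plYx : placement Y by apply: hM.
have sep : forall i i' : 'I_k.+1, i != i' -> 6 * u <= `|x i - x i'|.
  move=> i i' hne; rewrite /x /X.
  case: (eqVneq i ord0) => [hi|hi]; case: (eqVneq i' ord0) => [hi'|hi'].
  - by move: hne; rewrite hi hi' eqxx.
  - have := i1 i' hi'; move=> a; rewrite ler_normr; apply/orP; right; nra.
  - have := i1 i hi; move=> a; rewrite ler_normr; apply/orP; left; nra.
  - case: (ltngtP i i') => h.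
    + have : (i:nat)%:R + 1 <= (i':nat)%:R :> R by rewrite natr1 ler_nat.
      move=> a; rewrite ler_normr; apply/orP; right; nra.
    + have : (i':nat)%:R + 1 <= (i:nat)%:R :> R by rewrite natr1 ler_nat.
      move=> a; rewrite ler_normr; apply/orP; left; nra.
    + by move: hne; rewrite (val_inj h) eqxx.
have bnd : forall (z : 'I_k.+1 -> R) (W : 'I_k -> R), profile z -> placement W ->
    forall i j, `|z i - W j| <= 1.
  move=> z W pz pW i j; have /andP[a b] := pz i; have /andP[c' d] := pW j.
  rewrite ler_norml; apply/andP; split; lra.
have D3 : 3 * u <= D.
  rewrite leNgt; apply/negP => hD.
  have ex : forall i, exists j, `|x i - Y j| == D.
    move=> i; rewrite -(EE i).
    have [j hj] := dist_att _ _ _ (x i) hk (bnd _ _ profx plYx i).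
    by exists j; apply/eqP.
  pose f i := xchoose (ex i).
  have finj : injective f.
    move=> i i' h; have /eqP h1 := xchooseP (ex i); have /eqP h2 := xchooseP (ex i').
    rewrite -/(f i) h in h1; rewrite -/(f i') in h2.
    apply/eqP; apply: contraT => hne; have := sep _ _ hne.
    have := ler_distD (Y (f i')) (x i) (x i').
    rewrite h1 (distrC (Y _)) h2 => a b; lra.
  by have := leq_card f finj; rewrite !card_ord ltnn.
set Y' := M k.+1 x'.
have plY' : placement Y' by apply: hM.
set D' := dist Y' (x' ord0).
have x'0 : x' ord0 = 0 by rewrite x'E /X eqxx; lra.
have [j0 hj0] := dist_att _ _ _ (x' ord0) hk (bnd _ _ profx' plY' ord0).
rewrite -/D' x'0 sub0r normrN in hj0.
have /andP[y0 y1] := plY' j0.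
rewrite ger0_norm // in hj0.
have D'0 : 0 <= D' by apply: dist_ge0.
pose o1 : 'I_k.+1 := Ordinal (hk : (1 < k.+1)%N).
have D'4 : D' <= 4 * u.
  have : dist Y' (x' o1) = D' by apply/eqP; move/forallP: E'; apply.
  have -> : x' o1 = 8 * u by rewrite x'E /X /=; lra.
  move=> h; have := dist_lej _ _ Y' (8 * u) j0; rewrite h hj0 ler_normr.
  case/orP => a; lra.
have x0 : x ord0 = 2 * u by rewrite /x /X eqxx; ring.
have := hsp k.+1 x profx ord0 0 (ltac:(by rewrite lexx ler01) : (0:R) <= 0 <= 1).
rewrite -/x' -/Y' -/Y -/D.
have := dist_lej _ _ Y' (x ord0) j0; rewrite hj0 x0 => a b.
have : `|2 * u - D'| <= 2 * u by rewrite ler_norml; apply/andP; split; lra.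
lra.
Qed.
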